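(* Let $Q$ be a finite Moufang loop whose order is divisible by $3$. If the nucleus of $Q$ is trivial, then $Q$ possesses a proper subloop whose order is divisible by $3$.
   Context: A loop is a magma with identity in which all left and right translations are bijections; it is Moufang if it satisfies $xy\cdot zx=(x\cdot yz)x$. The nucleus of $Q$ is the set of $x\in Q$ with $x(yz)=(xy)z$, $y(xz)=(yx)z$ and $y(zx)=(yz)x$ for all $y,z\in Q$. *)

(* Defs.v *)
From mathcomp Require Import all_boot.
Set Implicit Arguments. Unset Strict Implicit. Unset Printing Implicit Defensive.

Definition is_loop (T : finType) (mul : T -> T -> T) (e : T) : Prop :=
  (forall x, mul e x = x /\ mul x e = x) /\
  (forall a, bijective (mul a)) /\
  (forall a, bijective (fun x => mul x a)).

Definition is_moufang (T : finType) (mul : T -> T -> T) : Prop :=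
  forall x y z, mul (mul x y) (mul z x) = mul (mul x (mul y z)) x.

Definition nucleus (T : finType) (mul : T -> T -> T) : {set T} :=
  [set x | [forall y, forall z,
      [&& mul x (mul y z) == mul (mul x y) z,
          mul y (mul x z) == mul (mul y x) z &
          mul y (mul z x) == mul (mul y z) x]]].

Definition is_subloop (T : finType) (mul : T -> T -> T) (e : T) (S : {set T}) : Prop :=
  e \in S /\
  (forall a b, a \in S -> b \in S -> mul a b \in S) /\
  (forall a b x, a \in S -> b \in S -> mul a x = b -> x \in S) /\
  (forall a b x, a \in S -> b \in S -> mul x a = b -> x \in S).

(* Main.v *)
Require Import Defs.
From mathcomp Require Import all_boot.

Lemma card3 (X : finType) (a b c : X) :
  a != b -> a != c -> b != c -> #|[set a; b; c]| = 3.
Proof.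
move=> ab ac bc.
have -> : [set a; b; c] = a |: [set b; c] by apply/setP=> y; rewrite !inE orbA.
by rewrite cardsU1 cards2 bc !inE negb_or ab ac.
Qed.

Lemma in3 (X : finType) (a b c y : X) :
  (y \in [set a; b; c]) = [|| y == a, y == b | y == c].
Proof. by rewrite !inE orbA. Qed.

Lemma orbit3_mod (X : finType) (s : X -> X) (A : {set X}) :
  (forall x, s (s (s x)) = x) -> (forall x, x \in A -> s x \in A) ->
  #|A| = #|[set x in A | s x == x]| %[mod 3].
Proof.
move=> s3; move: {2}#|A| (leqnn #|A|) => n.
elim: n A => [|n IH] A hA sA.
  move: hA; rewrite leqn0 => /eqP/cards0_eq ->.
  by rewrite (_ : [set x in set0 | s x == x] = set0) // ; apply/setP=> x; rewrite !inE.
case: (pickP [pred t | (t \in A) && (s t != t)]) => [t /andP[tA st] | none]; last first.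
  congr (_ %% 3); apply: eq_card => x; rewrite !inE.
  by have := none x; rewrite /=; case: (x \in A) => //= /negbFE ->.
have sst : s (s t) != s t.
  by apply: contra st => /eqP h; rewrite -{2}[t]s3 !h.
have tsst : t != s (s t).
  by apply: contra st => /eqP h; rewrite {1}h s3.
set O := [set t; s t; s (s t)].
have OA : O \subset A.
  by apply/subsetP=> y; rewrite in3 => /or3P[]/eqP->; rewrite ?sA.
have cO : #|O| = 3 by rewrite card3 // eq_sym.
have hcard : #|A| = #|A :\: O| + 3.
  by rewrite -(cardsID O A) addnC -cO (setIidPr OA).
have sA' : forall x, x \in A :\: O -> s x \in A :\: O.
  move=> x; rewrite inE in3 !negb_or => /andP[] /and3P[xt xst xsst] xA.
  rewrite inE in3 sA // andbT !negb_or; apply/and3P; split.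
  - by apply: contra xsst => /eqP h; rewrite -[x]s3 h.
  - by apply: contra xt => /eqP h; rewrite -[x]s3 h s3.
  - by apply: contra xst => /eqP h; rewrite -[x]s3 h !s3.
have hA' : #|A :\: O| <= n by move: hA; rewrite hcard addnS ltnS => /(leq_trans _); apply; apply: leq_addr.
rewrite hcard modnDr (IH _ hA' sA').
congr (_ %% 3); apply: eq_card => x; rewrite !inE -orbA.
case xfix: (s x == x); rewrite ?andbF ?andbT //.
case: (x \in A); rewrite ?andbF ?andbT //.
rewrite !negb_or; apply/and3P; split.
- by apply: contraNN st => /eqP h; rewrite -h.
- apply: contraNN st => /eqP h. rewrite h in xfix.
  by rewrite -{2}[t]s3 !(eqP xfix).
- apply: contraNN st => /eqP h. rewrite h s3 in xfix.
  by rewrite {1}(eqP xfix) s3.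
Qed.

Theorem proposition6p4 (Q : finType) (mul : Q -> Q -> Q) (e : Q) :
  is_loop mul e -> is_moufang mul ->
  (3 %| #|Q|)%N ->
  nucleus mul = [set e] ->
  exists S : {set Q}, [/\ is_subloop mul e S, S \proper [set: Q] & (3 %| #|S|)%N].
Proof.
move=> [Id [Lb Rb]] Mo H3 Nuc.
have Le a : mul e a = a by case: (Id a).
have Re a : mul a e = a by case: (Id a).
have linj a : injective (mul a) := bij_inj (Lb a).
have rinj a : injective (fun x => mul x a) := bij_inj (Rb a).
have flex x z : mul x (mul z x) = mul (mul x z) x by have := Mo x e z; rewrite Re Le.
have [inv invR] : exists inv : Q -> Q, forall a, mul a (inv a) = e.
  exists (fun a => odflt e [pick z | mul a z == e]) => a.
  case: pickP => [z /eqP //|none]; exfalso.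
  have [g _ gK] := Lb a.
  by have := none (g e); rewrite /= gK eqxx.
have invL a : mul (inv a) a = e.
  by apply: (linj a); rewrite flex invR Le Re.
have invU a b : mul a b = e -> b = inv a by move=> h; apply: (linj a); rewrite invR.
have invK a : inv (inv a) = a by symmetry; apply: invU; apply: invL.
have LIP x z : mul x (mul (inv x) z) = z.
  apply: (rinj x) => /=; have := Mo x (inv x) z; rewrite invR Le.
  by move=> ->.
have LIP' x z : mul (inv x) (mul x z) = z by have := LIP (inv x) z; rewrite invK.
have RIP y x : mul (mul y (inv x)) x = y.
  apply: (linj x); have := Mo x y (inv x); rewrite invL Re -flex.
  by move=> ->.
have RIP' y x : mul (mul y x) (inv x) = y by have := RIP y (inv x); rewrite invK.
have key x y z : mul (mul x y) z = e -> mul (mul y z) x = e.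
  move=> h.
  have hz : inv z = mul x y by rewrite (invU _ _ h) invK.
  have hy : y = mul (inv x) (inv z) by rewrite hz LIP'.
  by rewrite hy RIP invL.
pose s (t : Q * Q * Q) := ((t.1.2, t.2), t.1.1).
pose T := [set t : Q * Q * Q | mul (mul t.1.1 t.1.2) t.2 == e].
have s3 t : s (s (s t)) = t by case: t => [[a b] c].
have sT t : t \in T -> s t \in T.
  by case: t => [[a b] c]; rewrite !inE /= => /eqP/key/eqP.
have cT : (3 %| #|T|)%N.
  pose f (p : Q * Q) := ((p.1, p.2), inv (mul p.1 p.2)).
  have -> : T = [set f p | p in [set: Q * Q]].
    apply/setP => [[[a b] c]]; rewrite inE /=; apply/eqP/imsetP.
      by move=> h; exists (a, b); rewrite ?in_setT // /f /= -(invU _ _ h).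
    by case=> [[p1 p2]] _ [-> -> ->]; apply: invR.
  rewrite card_imset; last by move=> [a b] [c d] [-> ->].
  by rewrite cardsT card_prod dvdn_mulr.
pose D := [set x | mul (mul x x) x == e].
have cD : (3 %| #|D|)%N.
  have hm := @orbit3_mod _ s T s3 sT.
  have -> : #|D| = #|[set x in T | s x == x]|.
    have -> : [set x in T | s x == x] = [set ((x, x), x) | x in D].
      apply/setP => [[[a b] c]]; rewrite !inE /=; apply/idP/imsetP.
        case/andP => h /eqP [eb ec _]; rewrite ec eb in h *.
        by exists a => //; rewrite inE.
      by case=> x; rewrite inE => hx [-> -> ->]; rewrite hx eqxx.
    by rewrite card_imset // => a b [].
  by rewrite /dvdn -hm.
case: (pickP [pred x | (x \in D) && (x != e)]) => [x /andP[xD xe] | none]; last first.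
  have : D = [set e].
    apply/setP => y; rewrite !inE; apply/idP/idP.
      by move=> yD; have := none y; rewrite /= inE yD /= => /negbFE.
    by move=> /eqP ->; rewrite !Le.
  by move=> hD; move: cD; rewrite hD cards1.
move: xD; rewrite inE => /eqP hx.
have [x2 Ex2] : exists x2, mul x x = x2 by exists (mul x x).
rewrite Ex2 in hx.
have H2 : mul x x2 = e by rewrite -Ex2 flex Ex2.
have H4 : mul x2 x2 = x by have := Mo x x x; rewrite Ex2 H2 Le.
have x2e : x2 != e by apply: contra xe => /eqP h; rewrite -hx h Le.
have x2x : x != x2.
  by apply: contra xe => /eqP h; apply/eqP; apply: (linj x); rewrite Ex2 -h Re.
have ie : inv e = e by symmetry; apply: invU; apply: Le.
have ix : inv x = x2 by symmetry; apply: invU.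
have ix2 : inv x2 = x by symmetry; apply: invU.
pose S := [set e; x; x2].
have Smul a b : a \in S -> b \in S -> mul a b \in S.
  rewrite !in3 => /or3P[]/eqP-> /or3P[]/eqP->;
  by rewrite ?Le ?Re ?Ex2 ?H2 ?hx ?H4 !eqxx ?orbT.
have Sinv a : a \in S -> inv a \in S.
  by rewrite !in3 => /or3P[]/eqP->; rewrite ?ie ?ix ?ix2 !eqxx ?orbT.
exists S; split.
- split; first by rewrite in3 eqxx.
  split; first exact: Smul.
  split.
    by move=> a b z aS bS h; rewrite -(LIP' a z) h; apply: Smul => //; apply: Sinv.
  by move=> a b z aS bS h; rewrite -(RIP' z a) h; apply: Smul => //; apply: Sinv.
- rewrite properT; apply/negP => /eqP ST.
  have : x \in nucleus mul.
    rewrite inE; apply/forallP => y; apply/forallP => z.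
    have : y \in S by rewrite ST inE.
    have : z \in S by rewrite ST inE.
    rewrite !in3 => /or3P[]/eqP-> /or3P[]/eqP->;
    by do 3 rewrite ?Le ?Re ?Ex2 ?H2 ?hx ?H4; rewrite !eqxx.
  by rewrite Nuc inE (negbTE xe).
- by rewrite card3 // eq_sym.
Qed.
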